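(* Let $f \in \mathbb{N}_0[x^{\pm 1}]$ with $|\operatorname{supp}(f)| \geq 3$, and suppose there is a prime number $p$ with $\frac{5f(1)}{6} - 1 \leq p \leq f(1) - 2$. Then $f$ can be written as the sum of two irreducible elements of $\mathbb{N}_0[x^{\pm 1}]$.
   Context: $\mathbb{N}_0[x^{\pm 1}]$ denotes the semiring of Laurent polynomials in $x$ with nonnegative integer coefficients; $\operatorname{supp}(f)$ is the set of exponents occurring in $f$ with nonzero coefficient, and $f(1)$ is the sum of the coefficients. Its units are exactly $x^k$, $k\in\mathbb{Z}$. An element $f$ is irreducible if it is nonzero, not a unit, and whenever $f = gh$ with $g,h \in \mathbb{N}_0[x^{\pm 1}]$ one of $g,h$ is a unit. *)

(* Defs.v *)
From mathcomp Require Import all_boot all_algebra.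
Set Implicit Arguments. Unset Strict Implicit. Unset Printing Implicit Defensive.
Import GRing.Theory Num.Theory.

(* Elements of N_0[x^{+-1}]: a pair (k, p) represents x^k * p(x), p : {poly nat}.
   Representations are not unique; every notion below is defined through
   the coefficient function [lcoef], hence representation-independent. *)
Definition laurent := (int * {poly nat})%type.

Definition lcoef (f : laurent) (n : int) : nat :=
  if (f.1 <= n)%R then nth 0%N f.2 `|(n - f.1)%R|%N else 0%N.

Definition leqv (f g : laurent) : Prop := forall n, lcoef f n = lcoef g n.

Definition lmul (f g : laurent) : laurent := ((f.1 + g.1)%R, (f.2 * g.2)%R).

Definition lunit (u : laurent) : Prop :=
  exists k : int, forall n, lcoef u n = (n == k : nat).

Definition lirreducible (f : laurent) : Prop :=
  [/\ exists n, lcoef f n <> 0%N,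
      ~ lunit f &
      forall g h : laurent, leqv f (lmul g h) -> lunit g \/ lunit h].

Definition supp_size (f : laurent) : nat := count (fun c : nat => c != 0%N) f.2.

Definition eval1 (f : laurent) : nat := (f.2).[1%N]%R.

(* Main.v *)
Require Import Defs.
From mathcomp Require Import all_boot all_algebra.
From mathcomp Require Import all_order zify lra.
Set Implicit Arguments. Unset Strict Implicit. Unset Printing Implicit Defensive.

Lemma sel n k (w : nat -> nat) : k <= \sum_(0 <= i < n) w i ->
  exists psi : nat -> nat, (forall i, psi i <= w i) /\ \sum_(0 <= i < n) psi i = k.
Proof.
elim: n k => [|n IH] k.
  rewrite big_geq // leqn0 => /eqP ->; exists (fun _ => 0); split => //.
  by rewrite big_geq.
rewrite big_nat_recr //= => hk.
case: (leqP k (\sum_(0 <= i < n) w i)) => h.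
  have [psi [h1 h2]] := IH k h.
  exists (fun i => if i < n then psi i else 0); split.
    by move=> i; case: ifP.
  rewrite big_nat_recr //= ltnn addn0 -h2; apply: eq_big_nat => i /andP[_ ->] //.
exists (fun i => if i < n then w i else if i == n then k - \sum_(0 <= i < n) w i else 0); split.
  move=> i; case: ifP => // _; case: eqP => // ->; lia.
rewrite big_nat_recr //= ltnn eqxx.
rewrite (eq_big_nat _ _ (F2 := w)); last by move=> i /andP[_ ->].
lia.
Qed.

Lemma sel_j n k (w : nat -> nat) j : j < n -> 1 <= k -> 1 <= w j ->
  k <= \sum_(0 <= i < n) w i ->
  exists psi : nat -> nat, [/\ forall i, psi i <= w i, \sum_(0 <= i < n) psi i = k & 1 <= psi j].
Proof.
elim: n k => [|n IH] k //.
rewrite ltnS leq_eqVlt => /orP[/eqP ej|hj] hk hw; rewrite big_nat_recr //= => hs.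
  subst j.
  have h' : k - minn (w n) k <= \sum_(0 <= i < n) w i by lia.
  have [psi [h1 h2]] := sel h'.
  exists (fun i => if i < n then psi i else if i == n then minn (w n) k else 0); split.
  - move=> i; case: ifP => // _; case: eqP => // ->; exact: geq_minl.
  - rewrite big_nat_recr //= ltnn eqxx.
    rewrite (eq_big_nat _ _ (F2 := psi)); last by move=> i /andP[_ ->].
    lia.
  - rewrite ltnn eqxx; lia.
case: (leqP k (\sum_(0 <= i < n) w i)) => h.
  have [psi [h1 h2 h3]] := IH k hj hk hw h.
  exists (fun i => if i < n then psi i else 0); split => //.
    by move=> i; case: ifP.
    rewrite big_nat_recr //= ltnn addn0 -h2; apply: eq_big_nat => i /andP[_ ->] //.
  by rewrite hj.
exists (fun i => if i < n then w i else if i == n then k - \sum_(0 <= i < n) w i else 0); split.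
- move=> i; case: ifP => // _; case: eqP => // ->; lia.
- rewrite big_nat_recr //= ltnn eqxx.
  rewrite (eq_big_nat _ _ (F2 := w)); last by move=> i /andP[_ ->].
  lia.
- by rewrite hj.
Qed.

Lemma sum_trunc n d (phi : nat -> nat) : (forall i, n <= i -> phi i = 0) ->
  \sum_(0 <= i < n + d) phi i = \sum_(0 <= i < n) phi i.
Proof.
move=> h; elim: d => [|d IH]; first by rewrite addn0.
by rewrite addnS big_nat_recr //= ?IH ?h ?addn0 // ?leq_addr.
Qed.

Lemma ind_sum n x : x < n -> \sum_(0 <= i < n) (i == x : nat) = 1.
Proof.
elim: n => [|n IH] //; rewrite ltnS leq_eqVlt => /orP[/eqP ->|hx].
  rewrite big_nat_recr //= eqxx big1_seq //= => i; rewrite mem_index_iota => /andP[_ hi].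
  by rewrite (ltn_eqF hi).
by rewrite big_nat_recr //= IH // (gtn_eqF hx).
Qed.

Lemma sum_nz n (w : nat -> nat) : 0 < \sum_(0 <= i < n) w i -> exists2 i, i < n & 0 < w i.
Proof.
elim: n => [|n IH]; first by rewrite big_geq.
rewrite big_nat_recr //= addn_gt0 => /orP[/IH [i hi hw]|hw].
  by exists i => //; apply: ltnW.
by exists n.
Qed.

Import Order.TTheory GRing.Theory Num.Theory.
Local Open Scope ring_scope.

Lemma lcoef_k (k : int) (P : {poly nat}) (i : nat) : lcoef (k, P) (k + i%:Z) = P`_i.
Proof.
by rewrite /lcoef /= lerDl /= addrC addKr absz_nat.
Qed.

Lemma lcoef_lt (k n : int) (P : {poly nat}) : (n < k)%R -> lcoef (k, P) n = 0%N.
Proof. by rewrite /lcoef /= => /lt_geF ->. Qed.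

Lemma int_split (k n : int) : (n < k)%R \/ exists i : nat, n = (k + i%:Z).
Proof.
case: (lerP k n) => h; last by left.
right; exists `|(n - k)%R|%N.
rewrite gez0_abs ?subr_ge0 //. by rewrite addrC subrK.
Qed.

Lemma lcoef_shiftX (k : int) (v : nat) (P : {poly nat}) n :
  lcoef (k, 'X^v * P) n = lcoef ((k + v%:Z)%R, P) n.
Proof.
case: (int_split k n) => [h|[i ->]].
  rewrite !lcoef_lt //. apply: (lt_le_trans h). by rewrite lerDl.
rewrite lcoef_k coefXnM.
case: ltnP => hi.
  rewrite lcoef_lt //. by rewrite ltrD2l ltz_nat.
have -> : (k + i%:Z = (k + v%:Z) + (i - v)%N%:Z)%R.
  by rewrite -addrA -PoszD subnKC.
by rewrite lcoef_k.
Qed.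

Lemma shift_eq (k k' : int) (P P' : {poly nat}) :
  leqv (k, P) (k', P') -> (k <= k')%R -> P = 'X^`|(k' - k)%R|%N * P'.
Proof.
move=> E hk; apply/polyP => i.
have hk' : k' = (k + `|(k' - k)%R|%N%:Z)%R.
  by rewrite gez0_abs ?subr_ge0 // addrC subrK.
have := E (k + i%:Z); rewrite lcoef_k => ->.
by rewrite {1}hk' -lcoef_shiftX lcoef_k.
Qed.

Lemma norm_poly (P : {poly nat}) : P != 0 ->
  exists v (Q : {poly nat}), P = 'X^v * Q /\ Q`_0 != 0%N.
Proof.
move: {2}(size P) (leqnn (size P)) => n; elim: n P => [|n IH] P hs hP.
  by move: hP; rewrite -size_poly_eq0; move: hs; rewrite leqn0 => ->.
case h0: (P`_0 == 0%N); last by exists 0%N, P; rewrite expr0 mul1r h0.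
set Q := \poly_(i < (size P).-1) P`_i.+1.
have HP : P = 'X * Q.
  apply/polyP => i; rewrite coefXM coef_poly.
  case: i => [|i] /=; first by apply/eqP.
  case: ltnP => // hi; apply: nth_default.
  by move: hi; case: (size P).
have hQ : Q != 0 by apply/eqP => hQ; move: hP; rewrite HP hQ mulr0 eqxx.
have hsQ : (size Q <= n)%N.
  apply: leq_trans (size_poly _ _) _. by move: hs; case: (size P).
have [v [R [HQ hR]]] := IH Q hsQ hQ.
exists v.+1, R; split => //. by rewrite HP HQ mulrA -exprS.
Qed.

Lemma cancel_le a b (P Q : {poly nat}) : 'X^a * P = 'X^b * Q -> P`_0 != 0%N ->
  (a <= b)%N -> P = Q.
Proof.
move=> E h0 hab.
have hab' : a = b.
  have := congr1 (fun p : {poly nat} => p`_a) E; rewrite /= !coefXnM ltnn subnn.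
  case: ltnP => // hlt h; [by move: h0; rewrite h eqxx | by apply/eqP; rewrite eqn_leq hab hlt].
subst b; apply/polyP => i.
have := congr1 (fun p : {poly nat} => p`_(i + a)) E; rewrite /= !coefXnM.
by rewrite ltnNge leq_addl /= addnK.
Qed.

Lemma cancelX a b (P Q : {poly nat}) : 'X^a * P = 'X^b * Q -> P`_0 != 0%N ->
  Q`_0 != 0%N -> P = Q.
Proof.
move=> E hP hQ; case: (leqP a b) => h; first exact: cancel_le E hP h.
by symmetry; apply: cancel_le (esym E) hQ (ltnW h).
Qed.

Lemma lcoef_one (k0 n : int) : lcoef (k0, 1) n = (n == k0 : nat).
Proof.
case: (int_split k0 n) => [h|[i ->]].
  by rewrite lcoef_lt // (Order.POrderTheory.lt_eqF h).
rewrite lcoef_k coefC -{2}(addr0 k0) (inj_eq (addrI k0)).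
by case: i.
Qed.

Lemma lunit_X (k : int) (v : nat) : lunit (k, 'X^v).
Proof.
exists (k + v%:Z) => n. by rewrite -[_ ^+ v]mulr1 lcoef_shiftX lcoef_one.
Qed.

Lemma leqv_sym f g : leqv f g -> leqv g f.
Proof. by move=> E n; rewrite E. Qed.

Lemma eval_inv (k k' : int) (P P' : {poly nat}) :
  leqv (k, P) (k', P') -> P.[1%N] = P'.[1%N].
Proof.
move=> E; case: (lerP k k') => h.
  by rewrite (shift_eq E h) hornerM hornerXn expr1n mul1r.
by rewrite (shift_eq (leqv_sym E) (ltW h)) hornerM hornerXn expr1n mul1r.
Qed.

Lemma unit_eval (k : int) (P : {poly nat}) : lunit (k, P) -> P.[1%N] = 1%N.
Proof.
move=> [k0 hk]. have E : leqv (k, P) (k0, 1) by move=> n; rewrite hk lcoef_one.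
by rewrite (eval_inv E) hornerC.
Qed.

Lemma horner1_ge (Q : {poly nat}) : (2 <= size Q)%N -> leq (Q`_0 + lead_coef Q)%R (Q.[1%N])%R.
Proof.
rewrite horner_coef /lead_coef; case: (size Q) => [|[|n]] // _.
rewrite big_ord_recl big_ord_recr /= !expr1n !mulr1.
rewrite -[(_ + _)%R]/(_ + _)%N -[(_ + (_ + _)%R)%R]/(_ + (_ + _))%N.
by rewrite leq_add2l /bump /= add1n leq_addl.
Qed.

Lemma lead_nz (Q : {poly nat}) : Q != 0 -> lead_coef Q != 0%N.
Proof. by rewrite lead_coef_eq0. Qed.

Lemma val1_unit (k : int) (A : {poly nat}) : A.[1%N] = 1%N -> lunit (k, A).
Proof.
move=> h1.
have hA : A != 0 by apply/eqP => hA; move: h1; rewrite hA horner0.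
have [v [Q [HA hQ]]] := norm_poly hA.
have hQ1 : Q.[1%N] = 1%N by move: h1; rewrite HA hornerM hornerXn expr1n mul1r.
have hs : (size Q <= 1)%N.
  rewrite leqNgt; apply/negP => /horner1_ge; rewrite hQ1.
  have hQ' : Q != 0 by apply/eqP => e; move: hQ; rewrite e coef0 eqxx.
  move: hQ (lead_nz hQ'); move: (Q`_0) (lead_coef Q) => a b.
  change (a + b)%R with (a + b)%N; lia.
have HQ := size1_polyC hs.
have : Q`_0 = 1%N by move: hQ1; rewrite {1}HQ hornerC.
move=> e; rewrite e in HQ; rewrite HA HQ mulr1; exact: lunit_X.
Qed.

Lemma nz_coef (k : int) (P : {poly nat}) : P != 0 -> exists n, lcoef (k, P) n <> 0%N.
Proof.
move=> hP; exists (k + (size P).-1%:Z); rewrite lcoef_k.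
by apply/eqP; apply: lead_nz.
Qed.

Lemma irr_prime (k : int) (P : {poly nat}) : prime (P.[1%N]) -> lirreducible (k, P).
Proof.
move=> hp; have hP : P != 0 by apply/eqP => e; move: hp; rewrite e horner0.
split; first exact: nz_coef.
  by move/unit_eval => e; move: hp; rewrite e.
move=> [ka A] [kb B] /= E.
have := eval_inv E; rewrite hornerM => e.
rewrite e in hp.
have [a1|b1] : A.[1%N] = 1%N \/ B.[1%N] = 1%N.
  move: hp; rewrite -[(_ * _)%R]/(_ * _)%N => hp.
  have := dvdn_mulr B.[1%N] (dvdnn A.[1%N]).
  case/primeP: hp => hp1 /(_ (A.[1%N])) hd /hd /orP[/eqP->|/eqP ha]; first by left.
  right; move: ha; set a := A.[1%N]; set b := B.[1%N] => ha.
  clear hd; simpl in hp1; rewrite -/a -/b in hp1; nia.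
- by left; apply: val1_unit.
- by right; apply: val1_unit.
Qed.

Definition crit (H : {poly nat}) :=
  [/\ H`_0 != 0%N, (2 <= size H)%N, exists i, H`_i = 1%N &
      forall s, (0 < s < (size H).-1)%N -> H`_s = 0%N \/ H`_((size H).-1 - s) = 0%N].

Lemma sum_ge_term n (F : 'I_n -> nat) (j : 'I_n) : leq (F j) (\sum_(i < n) F i)%R.
Proof. rewrite (bigD1 j) //=. exact: leq_addr. Qed.

Lemma coefM_ge (A B : {poly nat}) i j : (j <= i)%N -> leq (A`_j * B`_(i - j))%R ((A * B)`_i)%R.
Proof.
move=> hj; rewrite coefM.
have := @sum_ge_term i.+1 (fun j : 'I_i.+1 => A`_j * B`_(i - j))%R (Ordinal (hj : j < i.+1)%N).
by [].
Qed.

Lemma crit_core (H A B : {poly nat}) : crit H -> A * B = H -> A`_0 != 0%N -> B`_0 != 0%N ->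
  A = 1 \/ B = 1.
Proof.
move=> [h0 h2 [i hi] hs] E hA0 hB0.
have hA : A != 0 by apply/eqP => e; move: hA0; rewrite e coef0 eqxx.
have hB : B != 0 by apply/eqP => e; move: hB0; rewrite e coef0 eqxx.
case: (leqP (size A) 1) => sA.
  left; have HA := size1_polyC sA.
  move: hi; rewrite -E HA coefCM => /eqP; rewrite muln_eq1 => /andP[/eqP -> _].
  by [].
case: (leqP (size B) 1) => sB.
  right; have HB := size1_polyC sB.
  move: hi; rewrite -E HB coefMC => /eqP; rewrite muln_eq1 => /andP[_ /eqP ->].
  by [].
exfalso.
have lA := lead_nz hA; have lB := lead_nz hB.
have hl : lead_coef A * lead_coef B != 0%N.
  by move: lA lB; rewrite -[(_ * _)%R]/(_ * _)%N muln_eq0 => /negPf -> /negPf ->.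
have sH : size H = ((size A).-1 + (size B).-1).+1.
  rewrite -E (size_proper_mul hl); move: sA sB; move: (size A) (size B) => a b; lia.
rewrite sH /= in hs.
have := hs (size A).-1.
have -> : ((size A).-1 + (size B).-1 - (size A).-1 = (size B).-1)%N by rewrite addKn.
have g1 : (0 < (size A).-1 < (size A).-1 + (size B).-1)%N.
  by apply/andP; split; move: sA sB; case: (size A) => // a; case: (size B) => // b; lia.
move=> /(_ g1) [].
  move=> e; have := coefM_ge A B (leqnn (size A).-1); rewrite E e subnn.
  move: lA hB0; rewrite /lead_coef; move: (A`_(size A).-1) (B`_0) => x y.
  change (x * y)%R with (x * y)%N; lia.
move=> e; have := coefM_ge A B (leq0n (size B).-1); rewrite E e subn0.
move: lB hA0; rewrite /lead_coef; move: (B`_(size B).-1) (A`_0) => x y.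
change (y * x)%R with (y * x)%N; lia.
Qed.

Lemma norm_equal (k k' : int) (P P' : {poly nat}) : leqv (k, P) (k', P') ->
  P`_0 != 0%N -> P'`_0 != 0%N -> P = P'.
Proof.
move=> E h h'; case: (lerP k k') => hk.
  apply: (@cancelX 0 `|(k' - k)%R|%N) => //; rewrite expr0 mul1r; exact: shift_eq.
symmetry; apply: (@cancelX 0 `|(k - k')%R|%N) => //; rewrite expr0 mul1r.
apply: shift_eq (ltW hk); exact: leqv_sym.
Qed.

Lemma irr_crit (k : int) (H : {poly nat}) : crit H -> lirreducible (k, H).
Proof.
move=> hc; have [h0 h2 _ _] := hc.
have hH : H != 0 by apply/eqP => e; move: h0; rewrite e coef0 eqxx.
split; first exact: nz_coef.
  move=> [k0 hk]; have E : leqv (k, H) (k0, 1) by move=> n; rewrite hk lcoef_one.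
  have e : H = 1 by apply: (norm_equal E h0); rewrite coefC.
  by move: h2; rewrite e size_poly1.
move=> [ka A] [kb B] /= E.
have hA : A != 0.
  apply/eqP => e; move: h0; have := E (k + 0%N%:Z); rewrite lcoef_k => ->.
  by rewrite /lcoef /= e mul0r coef0; case: ifP.
have hB : B != 0.
  apply/eqP => e; move: h0; have := E (k + 0%N%:Z); rewrite lcoef_k => ->.
  by rewrite /lcoef /= e mulr0 coef0; case: ifP.
have [va [A' [HA hA']]] := norm_poly hA.
have [vb [B' [HB hB']]] := norm_poly hB.
have E2 : leqv (k, H) ((ka + kb + (va + vb)%N%:Z)%R, A' * B').
  move=> n; rewrite E /lmul /= -lcoef_shiftX HA HB.
  by rewrite exprD -!mulrA (mulrCA A').
have e : H = A' * B'.
  by apply: (norm_equal E2 h0); rewrite coef0M -[(_ * _)%R]/(_ * _)%N muln_eq0 negb_or hA' hB'.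
have [eA|eB] := crit_core hc (esym e) hA' hB'.
  by left; rewrite HA eA mulr1; apply: lunit_X.
by right; rewrite HB eB mulr1; apply: lunit_X.
Qed.

Lemma build (F : {poly nat}) (n D : nat) (phi : nat -> nat) :
  (0 < D)%N -> (D < n)%N -> phi 0%N != 0%N -> phi D != 0%N -> (exists i, phi i = 1%N) ->
  (forall i, D < i -> phi i = 0)%N ->
  (forall s, 0 < s < D -> phi s = 0 \/ phi (D - s) = 0)%N ->
  (forall i, leq (phi i) (F`_i)%R) ->
  exists H : {poly nat}, [/\ crit H, forall i, leq (H`_i)%R (F`_i)%R &
     H.[1%N] = (\sum_(0 <= i < n) phi i)%N].
Proof.
move=> hD hDn h0 hDD [i0 hi0] hz hpair hF.
set H := \poly_(i < D.+1) phi i.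
have cH : forall i, H`_i = phi i.
  move=> i; rewrite coef_poly; case: ltnP => // hi; rewrite hz //.
have sH : size H = D.+1 by rewrite size_poly_eq.
exists H; split.
- split; rewrite ?cH ?sH //.
  by exists i0; rewrite cH.
  by move=> s hs; rewrite !cH; apply: hpair.
- by move=> i; rewrite cH.
rewrite /H horner_poly.
have -> : n = (D.+1 + (n - D.+1))%N by rewrite subnKC.
rewrite sum_trunc; last by move=> i hi; apply: hz.
rewrite big_mkord; apply: eq_bigr => i _.
by rewrite expr1n mulr1.
Qed.

Lemma hornerF (F : {poly nat}) : F.[1%N] = (\sum_(0 <= i < size F) (F`_i)%R)%N.
Proof.
rewrite horner_coef big_mkord; apply: eq_bigr => i _; by rewrite expr1n mulr1.
Qed.

Lemma exists_H (F : {poly nat}) (m : nat) : F`_0 != 0%N -> (2 <= size F)%N -> (2 <= m)%N ->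
  (3 * m <= F.[1%N] + 4)%N ->
  exists H : {poly nat}, [/\ crit H, forall i, leq (H`_i)%R (F`_i)%R & H.[1%N] = m].
Proof.
move=> hF0 hs hm hN.
set t := (size F).-1.
have hst : size F = t.+1 by rewrite /t; case: (size F) hs.
have ht : (1 <= t)%N by rewrite /t; case: (size F) hs => // [[|]].
have hFt : F`_t != 0%N by rewrite -[t]/((size F).-1); apply: lead_nz; rewrite -size_poly_gt0 hst.
have hFz : forall i, (t < i)%N -> F`_i = 0%N.
  by move=> i hi; apply: nth_default; rewrite hst.
set c := fun i => F`_i.
set wL := fun i => if (2 * i < t)%N then c i else 0%N.
set wM := fun i => if (2 * i == t)%N then c i else 0%N.
set wU := fun i => if (t < 2 * i)%N then c i else 0%N.
have hsum : F.[1%N] = (\sum_(0 <= i < t.+1) wL i + \sum_(0 <= i < t.+1) wM i +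
                         \sum_(0 <= i < t.+1) wU i)%N.
  rewrite hornerF hst -!big_split /=; apply: eq_bigr => i _.
  rewrite /wL /wM /wU; case: (ltngtP (2 * i) t) => h; rewrite ?addn0 ?add0n //.
have hsumphi : forall psi : nat -> nat, forall x, (x < t.+1)%N ->
    (\sum_(0 <= i < t.+1) psi i = m - 1)%N ->
    (\sum_(0 <= i < t.+1) (psi i + (i == x))%N = m)%N.
  move=> psi x hx e; rewrite big_split /= e ind_sum //; lia.
have h01 : (0 < m - 1)%N by lia.
case: (leqP (m - 1) (\sum_(0 <= i < t.+1) wM i)) => hM.
  have [D hD hwD] := sum_nz (leq_trans h01 hM).
  have e2 : (2 * D = t)%N by move: hwD; rewrite /wM; case: eqP.
  have [psi [hp1 hp2 hp3]] := sel_j hD h01 hwD hM.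
  have hp0 : forall i, (2 * i != t)%N -> psi i = 0%N.
    by move=> i hi; move: (hp1 i); rewrite /wM (negPf hi); case: (psi i).
  have hps0 : psi 0%N = 0%N by apply: hp0; lia.
  set phi := (fun i => psi i + (i == 0%N))%N.
  have a1 : (0 < D)%N by lia.
  have a2 : (D < t.+1)%N by lia.
  have a3 : phi 0%N != 0%N by rewrite /phi eqxx addn1.
  have a4 : phi D != 0%N.
    rewrite /phi (_ : D == 0%N = false); last by apply/negbTE; lia. by rewrite addn0 -lt0n.
  have a5 : exists i, phi i = 1%N by exists 0%N; rewrite /phi hps0.
  have a6 : forall i, (D < i)%N -> phi i = 0%N.
    move=> i hi; rewrite /phi hp0; last by lia. by rewrite (_ : i == 0%N = false) //; apply/negbTE; lia.
  have a7 : forall s, (0 < s < D)%N -> phi s = 0%N \/ phi (D - s)%N = 0%N.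
    move=> s hs0; left; rewrite /phi hp0; last by lia. by rewrite (_ : s == 0%N = false) //; apply/negbTE; lia.
  have a8 : forall i, leq (phi i) (F`_i)%R.
    move=> i; rewrite /phi; case: (eqVneq i 0%N) => [->|hi0]; first by rewrite hps0; move: hF0; case: (F`_0).
    rewrite addn0; apply: leq_trans (hp1 i) _; rewrite /wM; case: ifP => //.
  have [H [cH bH vH]] := build a1 a2 a3 a4 a5 a6 a7 a8.
  by exists H; split => //; rewrite vH hsumphi //; lia.
case: (leqP (m - 1) (\sum_(0 <= i < t.+1) wL i)) => hL.
  have hw0 : (1 <= wL 0%N)%N by rewrite /wL muln0 ht lt0n.
  have [psi [hp1 hp2 hp3]] := sel_j (ltn0Sn t) h01 hw0 hL.
  have hp0 : forall i, ~~ (2 * i < t)%N -> psi i = 0%N.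
    by move=> i hi; move: (hp1 i); rewrite /wL (negPf hi); case: (psi i).
  have hpst : psi t = 0%N by apply: hp0; lia.
  set phi := (fun i => psi i + (i == t))%N.
  have a1 : (0 < t)%N by lia.
  have a2 : (t < t.+1)%N by lia.
  have a3 : phi 0%N != 0%N by rewrite /phi -lt0n; apply: leq_trans hp3 (leq_addr _ _).
  have a4 : phi t != 0%N by rewrite /phi eqxx addn1.
  have a5 : exists i, phi i = 1%N by exists t; rewrite /phi hpst eqxx.
  have a6 : forall i, (t < i)%N -> phi i = 0%N.
    move=> i hi; rewrite /phi hp0; last by lia. by rewrite (_ : i == t = false) //; apply/negbTE; lia.
  have a7 : forall s, (0 < s < t)%N -> phi s = 0%N \/ phi (t - s)%N = 0%N.
    move=> s hs0; case: (ltnP (2 * s) t) => h2.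
      right; rewrite /phi hp0; last by lia. by rewrite (_ : (t - s)%N == t = false) //; apply/negbTE; lia.
    left; rewrite /phi hp0; last by lia. by rewrite (_ : s == t = false) //; apply/negbTE; lia.
  have a8 : forall i, leq (phi i) (F`_i)%R.
    move=> i; rewrite /phi; case: (eqVneq i t) => [->|hi0]; first by rewrite hpst; move: hFt; case: (F`_t).
    rewrite addn0; apply: leq_trans (hp1 i) _; rewrite /wL; case: ifP => //.
  have [H [cH bH vH]] := build a1 a2 a3 a4 a5 a6 a7 a8.
  by exists H; split => //; rewrite vH hsumphi //; lia.
have hU : (m - 1 <= \sum_(0 <= i < t.+1) wU i)%N by lia.
have hwt : (1 <= wU t)%N by rewrite /wU (_ : (t < 2 * t)%N = true) ?lt0n //; lia.
have [psi [hp1 hp2 hp3]] := sel_j (ltnSn t) h01 hwt hU.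
have hp0 : forall i, ~~ (t < 2 * i)%N -> psi i = 0%N.
  by move=> i hi; move: (hp1 i); rewrite /wU (negPf hi); case: (psi i).
have hpz : forall i, (t < i)%N -> psi i = 0%N.
  by move=> i hi; move: (hp1 i); rewrite /wU /c hFz //; case: ifP; case: (psi i).
have hps0 : psi 0%N = 0%N by apply: hp0; lia.
set phi := (fun i => psi i + (i == 0%N))%N.
have a1 : (0 < t)%N by lia.
have a2 : (t < t.+1)%N by lia.
have a3 : phi 0%N != 0%N by rewrite /phi eqxx addn1.
have a4 : phi t != 0%N by rewrite /phi -lt0n; apply: leq_trans hp3 (leq_addr _ _).
have a5 : exists i, phi i = 1%N by exists 0%N; rewrite /phi hps0.
have a6 : forall i, (t < i)%N -> phi i = 0%N.
  move=> i hi; rewrite /phi hpz //. by rewrite (_ : i == 0%N = false) //; apply/negbTE; lia.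
have a7 : forall s, (0 < s < t)%N -> phi s = 0%N \/ phi (t - s)%N = 0%N.
  move=> s hs0; case: (ltnP t (2 * s)) => h2.
    right; rewrite /phi hp0; last by lia. by rewrite (_ : (t - s)%N == 0%N = false) //; apply/negbTE; lia.
  left; rewrite /phi hp0; last by lia. by rewrite (_ : s == 0%N = false) //; apply/negbTE; lia.
have a8 : forall i, leq (phi i) (F`_i)%R.
  move=> i; rewrite /phi; case: (eqVneq i 0%N) => [->|hi0]; first by rewrite hps0; move: hF0; case: (F`_0).
  rewrite addn0; apply: leq_trans (hp1 i) _; rewrite /wU; case: ifP => //.
have [H [cH bH vH]] := build a1 a2 a3 a4 a5 a6 a7 a8.
by exists H; split => //; rewrite vH hsumphi //; lia.
Qed.


Lemma ratconv (N p : nat) :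
  (5%:Q * N%:Q / 6%:Q - 1 <= p%:Q)%R ->
  (p%:Q <= N%:Q - 2%:Q)%R -> (5 * N <= 6 * p + 6)%N /\ (p + 2 <= N)%N.
Proof.
move=> h1 h2; split; rewrite -(ler_nat rat) ?natrD ?natrM; lra.
Qed.

Lemma cnt0 (s : seq nat) : (forall i, nth 0%N s i = 0%N) -> count (fun c : nat => c != 0%N) s = 0%N.
Proof.
elim: s => [|x s IH] //= h; have := h 0%N => /= ->; rewrite IH //= => i; exact: (h i.+1).
Qed.

Lemma cnt1 (s : seq nat) v : (forall i, nth 0%N s i != 0%N -> i = v) ->
  (count (fun c : nat => c != 0%N) s <= 1)%N.
Proof.
elim: s v => [|x s IH] v //= h.
case: (eqVneq x 0%N) => hx /=.
  rewrite add0n; apply: (IH v.-1) => i hi; have := h i.+1 hi; by move=> <-.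
have := h 0%N hx => ev; rewrite cnt0 // => i; apply/eqP; apply/negP => /negP hi.
by have := h i.+1 hi; rewrite -ev.
Qed.

Lemma main_norm (k : int) (F : {poly nat}) (m : nat) : F`_0 != 0%N -> (2 <= size F)%N ->
  (2 <= m)%N -> (3 * m <= F.[1%N] + 4)%N -> prime (F.[1%N] - m)%N ->
  exists g h : laurent,
    [/\ lirreducible g, lirreducible h &
        forall n : int, lcoef (k, F) n = (lcoef g n + lcoef h n)%N].
Proof.
move=> h0 hs hm h3 hp.
have [H [cH bH vH]] := exists_H h0 hs hm h3.
set G := \poly_(i < size F) (subn (F`_i)%R (H`_i)%R).
have EF : F = G + H.
  apply/polyP => i; rewrite coefD coef_poly; case: ltnP => hi.
    by rewrite -[(_ + _)%R]/(_ + _)%N subnK.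
  have hF : F`_i = 0%N := nth_default _ hi. rewrite hF; move: (bH i); rewrite hF; by case: (H`_i).
exists (k, G), (k, H); split.
- apply: irr_prime; move: hp; rewrite {1}EF hornerD vH -[(_ + _)%R]/(_ + _)%N addnK //.
- exact: irr_crit.
move=> n; case: (int_split k n) => [hn|[i ->]]; first by rewrite !lcoef_lt.
by rewrite !lcoef_k {1}EF coefD.
Qed.

Theorem lemma2p10 (f : laurent) (p : nat) :
  (3 <= supp_size f)%N ->
  prime p ->
  (5%:Q * (eval1 f)%:Q / 6%:Q - 1 <= p%:Q)%R ->
  (p%:Q <= (eval1 f)%:Q - 2%:Q)%R ->
  exists g h : laurent,
    [/\ lirreducible g, lirreducible h &
        forall n : int, lcoef f n = (lcoef g n + lcoef h n)%N].
Proof.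
case: f => [k F] hsupp hp h1 h2.
have [e1 e2] := ratconv h1 h2.
rewrite /eval1 /= in e1 e2.
have hF : F != 0 by apply/eqP => e; move: hsupp; rewrite /supp_size /= e polyseq0.
have [v [F' [HF hF']]] := norm_poly hF.
have hs : (2 <= size F')%N.
  rewrite ltnNge; apply/negP => /size1_polyC HF'.
  move: hsupp; rewrite /supp_size /=; apply/negP; rewrite -ltnNge ltnS.
  apply: (leq_trans (n := 1%N)) => //.
  apply: (@cnt1 _ v) => i; change (F`_i != 0%N -> i = v).
  rewrite HF coefXnM; case: ltnP => hi; first by rewrite eqxx.
  rewrite HF' coefC; case: (eqVneq (i - v)%N 0%N) => [e _|_]; [lia | by rewrite eqxx].
have hN : F.[1%N] = F'.[1%N] by rewrite HF hornerM hornerXn expr1n mul1r.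
rewrite hN in e1 e2.
have a1 : (2 <= F'.[1%N] - p)%N by lia.
have a2 : (3 * (F'.[1%N] - p) <= F'.[1%N] + 4)%N by lia.
have a3 : prime (F'.[1%N] - (F'.[1%N] - p))%N by rewrite subKn //; lia.
have [g [h [hg hh he]]] := main_norm (k + v%:Z) hF' hs a1 a2 a3.
exists g, h; split => // n; by rewrite HF lcoef_shiftX he.
Qed.
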